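(* Let $f$ be a generalized timelike minimal surface with real Weierstrass data $(g_1,g_2,\hat{\omega}_1du,\hat{\omega}_2dv)$, and let $p$ be a singular point with $\hat\omega_1\hat\omega_2(p)=0$ and $\operatorname{rank}(df_p)=1$. Then: (i) If $\hat\omega_1(p)=0$, then $f$ is a front at $p$ if and only if $(g_1)_u(p)\neq0$; if $\hat\omega_2(p)=0$, then $f$ is a front at $p$ if and only if $(g_2)_v(p)\neq0$. (ii) If $\hat\omega_1(p)=0$, then $p$ is non-degenerate if and only if $(\hat\omega_1)_u(p)\neq0$ and $g_1g_2(p)\neq1$; if $\hat\omega_2(p)=0$, then $p$ is non-degenerate if and only if $(\hat\omega_2)_v(p)\neq0$ and $g_1g_2(p)\neq1$.
   Context: $\mathbb{L}^3$ is $\mathbb{R}^3$ with the Lorentzian metric $\langle\,,\rangle=-dt^2+dx^2+dy^2$. A generalized timelike minimal surface is a non-constant smooth map $f\colon\Sigma\to\mathbb{L}^3$ from a 2-manifold which is an immersion on an open dense subset and such that near each point there are local coordinates $(u,v)$ with $\langle f_u,f_u\rangle=\langle f_v,f_v\rangle=0$ and $f_{uv}=0$. In such coordinates $f(u,v)=\tfrac12\int_{u_0}^u(-1-g_1^2,1-g_1^2,2g_1)\hat{\omega}_1du+\tfrac12\int_{v_0}^v(1+g_2^2,1-g_2^2,-2g_2)\hat{\omega}_2dv+f(u_0,v_0)$, with $g_1,\hat\omega_1$ functions of $u$ and $g_2,\hat\omega_2$ functions of $v$; this quadruple is the real Weierstrass data. Standing assumption: $g_1,g_2$ take finite real values at every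 singular point (point where $f$ is not an immersion). Such $f$ is a frontal with unit normal $n=(g_1+g_2,\,-g_1+g_2,\,1+g_1g_2)/\sqrt{(1-g_1g_2)^2+2(g_1+g_2)^2}$ (Euclidean-orthogonal to $df$); $f$ is a front at $p$ if $(f,n)$ is an immersion at $p$. The signed area density is $\lambda=\det(f_u,f_v,n)$, and a singular point $p$ is non-degenerate if $d\lambda_p\neq0$. *)

(* Defs.v *)
From HB Require Import structures.
From mathcomp Require Import all_boot all_order all_algebra.
From mathcomp Require Import all_classical all_reals all_analysis.
Set Implicit Arguments. Unset Strict Implicit. Unset Printing Implicit Defensive.
Import Order.TTheory GRing.Theory Num.Theory.
Import numFieldNormedType.Exports.
Local Open Scope classical_set_scope.
Local Open Scope ring_scope.

Section Defs.
Variable R : realType.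

Definition vec3 (a b c : R) : 'rV[R]_3 := \row_(j < 3) [:: a; b; c]`_j.
Definition pt2 (u v : R) : 'rV[R]_2 := \row_(j < 2) [:: u; v]`_j.
Definition e_u : 'rV[R]_2 := pt2 1 0.
Definition e_v : 'rV[R]_2 := pt2 0 1.

Definition smooth_on (A : set R) (g : R -> R) :=
  forall (n : nat) (x : R), A x -> derivable (derive1n n g) x 1.

Definition immersion_at (m : nat) (h : 'rV[R]_2 -> 'rV[R]_m) (q : 'rV[R]_2) :=
  differentiable h q /\ injective ('d h q).

(* the two null curve directions appearing in the real Weierstrass formula *)
Definition wdir1 (g : R) : 'rV[R]_3 := vec3 (-1 - g ^+ 2) (1 - g ^+ 2) (2 * g).
Definition wdir2 (g : R) : 'rV[R]_3 := vec3 (1 + g ^+ 2) (1 - g ^+ 2) (- (2 * g)).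

Definition unit_normal (g1 g2 : R -> R) (q : 'rV[R]_2) : 'rV[R]_3 :=
  let a := g1 (q 0 0) in let b := g2 (q 0 1) in
  (Num.sqrt ((1 - a * b) ^+ 2 + 2 * (a + b) ^+ 2))^-1 *: vec3 (a + b) (- a + b) (1 + a * b).

Definition mx3 (x y z : 'rV[R]_3) : 'M[R]_3 :=
  \matrix_(i < 3, j < 3) [:: x 0 j; y 0 j; z 0 j]`_i.

Definition area_density (f : 'rV[R]_2 -> 'rV[R]_3) (n : 'rV[R]_2 -> 'rV[R]_3)
  (q : 'rV[R]_2) : R :=
  \det (mx3 ('D_e_u f q) ('D_e_v f q) (n q)).

Definition front_at (f n : 'rV[R]_2 -> 'rV[R]_3) (p : 'rV[R]_2) :=
  immersion_at (fun q => row_mx (f q) (n q)) p.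

Definition nondegenerate_at (f n : 'rV[R]_2 -> 'rV[R]_3) (p : 'rV[R]_2) :=
  differentiable (area_density f n) p /\
  exists w : 'rV[R]_2, 'd (area_density f n) p w != 0.

Definition rect (a1 b1 a2 b2 : R) : set 'rV[R]_2 :=
  fun q => (q 0 0 \in `]a1, b1[) /\ (q 0 1 \in `]a2, b2[).

End Defs.

(* Main.v *)
Require Import Defs.
From HB Require Import structures.
From mathcomp Require Import all_boot all_order all_algebra.
From mathcomp Require Import all_classical all_reals all_analysis.
From mathcomp Require Import ring lra.
Import Order.TTheory GRing.Theory Num.Theory.
Import numFieldNormedType.Exports.
Local Open Scope classical_set_scope.
Local Open Scope ring_scope.

Section Infra.
Context {R : realType}.
Local Notation V2 := ('rV[R]_2).
Local Notation eu := (e_u R).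
Local Notation ev := (e_v R).

Lemma pt2_00 (u v : R) : pt2 u v 0 0 = u. Proof. by rewrite /pt2 mxE. Qed.
Lemma pt2_01 (u v : R) : pt2 u v 0 1 = v. Proof. by rewrite /pt2 mxE. Qed.

Lemma pt2E (q : V2) : q = pt2 (q 0 0) (q 0 1).
Proof.
apply/rowP => i; rewrite /pt2 mxE.
case: i => [[|[|//]] Hi] /=.
  by congr (q 0 _); apply: val_inj.
by congr (q 0 _); apply: val_inj.
Qed.

Lemma pt2_eq (u v u' v' : R) : pt2 u v = pt2 u' v' <-> u = u' /\ v = v'.
Proof.
split; last by case=> -> ->.
by move=> E; split; [rewrite -(pt2_00 u v) E pt2_00 | rewrite -(pt2_01 u v) E pt2_01].
Qed.

Lemma shift_u (h u v : R) : h *: eu + pt2 u v = pt2 (h + u) v.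
Proof.
apply/rowP => i; rewrite /e_u /pt2 !mxE.
case: i => [[|[|//]] Hi] /=; by rewrite ?mulr1 ?mulr0 ?add0r.
Qed.

Lemma shift_v (h u v : R) : h *: ev + pt2 u v = pt2 u (h + v).
Proof.
apply/rowP => i; rewrite /e_v /pt2 !mxE.
case: i => [[|[|//]] Hi] /=; by rewrite ?mulr1 ?mulr0 ?add0r.
Qed.

Lemma decomp (h : V2) : h = h 0 0 *: eu + h 0 1 *: ev.
Proof.
apply/rowP => i; rewrite /e_u /e_v /pt2 !mxE.
case: i => [[|[|//]] Hi] /=; rewrite ?mulr1 ?mulr0 ?addr0 ?add0r;
  by congr (h 0 _); apply: val_inj.
Qed.

Lemma D_eu (W : normedModType R) (F : V2 -> W) u v :
  'D_eu F (pt2 u v) = 'D_1 (fun s => F (pt2 s v)) u.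
Proof.
rewrite /derive; set G1 := (fun h => _); set G2 := (fun h => _); suff -> : G1 = G2 by []; apply: funext => h; rewrite /G1 /G2 /=.
by rewrite shift_u [h%:A]mulr1.
Qed.

Lemma D_ev (W : normedModType R) (F : V2 -> W) u v :
  'D_ev F (pt2 u v) = 'D_1 (fun s => F (pt2 u s)) v.
Proof.
rewrite /derive; set G1 := (fun h => _); set G2 := (fun h => _); suff -> : G1 = G2 by []; apply: funext => h; rewrite /G1 /G2 /=.
by rewrite shift_v [h%:A]mulr1.
Qed.

Lemma d_decomp (W : normedModType R) (F : V2 -> W) q h :
  differentiable F q ->
  'd F q h = h 0 0 *: 'D_eu F q + h 0 1 *: 'D_ev F q.
Proof.
move=> dF; rewrite !deriveE // {1}(decomp h).
by rewrite linearD !linearZ.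
Qed.

Lemma diff_coord_comp (W : normedModType R) (phi : R -> W) (q : V2) i :
  derivable phi (q 0 i) 1 -> differentiable (fun q : V2 => phi (q 0 i)) q.
Proof.
move=> dphi.
have -> : (fun q : V2 => phi (q 0 i)) = phi \o (fun q : V2 => q 0 i) by [].
apply: differentiable_comp; first exact: differentiable_coord.
exact/derivable1_diffP.
Qed.

Lemma vec3E (x y z : R) (i : 'I_3) : vec3 x y z 0 i = [:: x; y; z]`_i.
Proof. by rewrite /vec3 mxE. Qed.

Lemma vec3_dec (x y z : R) :
  vec3 x y z = x *: vec3 1 0 0 + y *: vec3 0 1 0 + z *: vec3 0 0 1.
Proof.
apply/rowP => i; rewrite !mxE.
case: i => [[|[|[|//]]] Hi] /=; by rewrite ?mulr1 ?mulr0 ?addr0 ?add0r.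
Qed.

Lemma scale_vec3 (c x y z : R) : c *: vec3 x y z = vec3 (c * x) (c * y) (c * z).
Proof.
apply/rowP => i; rewrite !mxE.
case: i => [[|[|[|//]]] Hi] /=; by [].
Qed.

Lemma vec3_eq0 (x y z : R) : vec3 x y z = 0 -> [/\ x = 0, y = 0 & z = 0].
Proof.
move=> E; split.
- by have := congr1 (fun M : 'rV[R]_3 => M 0 0) E; rewrite vec3E mxE.
- by have := congr1 (fun M : 'rV[R]_3 => M 0 1) E; rewrite vec3E mxE.
- by have := congr1 (fun M : 'rV[R]_3 => M 0 2) E; rewrite vec3E mxE.
Qed.

Definition Sab (a b : R) := (1 - a * b) ^+ 2 + 2 * (a + b) ^+ 2.

Lemma Sab_gt0 (a b : R) : 0 < Sab a b.
Proof. rewrite /Sab; nra. Qed.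

Lemma sqrtS_gt0 (a b : R) : 0 < Num.sqrt (Sab a b).
Proof. by rewrite sqrtr_gt0 Sab_gt0. Qed.

Lemma sqrtS_neq0 (a b : R) : Num.sqrt (Sab a b) != 0.
Proof. by rewrite gt_eqF // sqrtS_gt0. Qed.

End Infra.

Lemma det3 (R : comNzRingType) (M : 'M[R]_3) : \det M =
  M 0 0 * (M 1 1 * M 2 2 - M 1 2 * M 2 1)
  - M 0 1 * (M 1 0 * M 2 2 - M 1 2 * M 2 0)
  + M 0 2 * (M 1 0 * M 2 1 - M 1 1 * M 2 0).
Proof.
rewrite (expand_det_row _ 0) !big_ord_recl big_ord0 /cofactor.
rewrite !(expand_det_row _ 0) !big_ord_recl !big_ord0 /cofactor.
rewrite !(expand_det_row _ 0) !big_ord_recl !big_ord0 /cofactor.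
rewrite !det_mx00 !mxE /=.
pose m i j := M (inord i) (inord j).
have HM : forall i j : 'I_3, M i j = m i j by move=> i j; rewrite /m !inord_val.
rewrite !HM /bump /= !modn_small //.
rewrite /m /=. ring.
Qed.

Lemma det_id (R : realType) (al be a b : R) :
  \det (mx3 (al *: wdir1 a) (be *: wdir2 b)
     ((Num.sqrt (Sab a b))^-1 *: vec3 (a + b) (- a + b) (1 + a * b))) =
  -2 * al * be * ((1 - a * b) * Num.sqrt (Sab a b)).
Proof.
rewrite det3 /mx3 /wdir1 /wdir2 /vec3 !mxE /=.
set s := Num.sqrt (Sab a b).
have s0 : s != 0 by exact: sqrtS_neq0.
have sS : s ^+ 2 = Sab a b by rewrite sqr_sqrtr // ltW // Sab_gt0.
have hs : s = Sab a b / s by rewrite -sS; field.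
rewrite [X in _ = _ * (_ * X)]hs /Sab.
field => //.
Qed.

Section Near.
Context {R : realType} {V W : normedModType R}.

Lemma near0_diff (h : V -> W) x : (\forall y \near x, h y = 0) ->
  differentiable h x /\ 'd h x = 0 :> (V -> W).
Proof.
move=> h0.
have hx : h x = 0 by exact: (nbhs_singleton h0).
have E : h \o shift x = cst (h x) + (0 : V -> W) +o_ 0 id.
  apply/eqaddoP => _/posnumP[e].
  rewrite [\forall y \near _, _](near_shift x) /=.
  near=> y.
  have E1 : ((h \o +%R^~ x - (cst (h x) + 0)) (y + (0 - x))) = h y - (h x + 0). by change (h (y + (0 - x) + x) - (h x + 0) = h y - (h x + 0)); rewrite add0r subrK.
  rewrite /= E1.
  rewrite (near h0 y) //.
  by rewrite hx addr0 subrr normr0 mulr_ge0.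
have [c0 _] := dcst (0 : W) x.
have dh : 'd h x = 0 :> (V -> W) by apply: diff_unique.
split => //; apply/diff_locallyP; rewrite dh; split => //.
Unshelve. all: by end_near.
Qed.

Lemma near_diff (f g : V -> W) x : (\forall y \near x, f y = g y) ->
  differentiable g x -> differentiable f x /\ 'd f x = 'd g x :> (V -> W).
Proof.
move=> fg dg.
have H0 : \forall y \near x, (f - g) y = 0.
  near=> y. change (f y - g y = 0). by rewrite (near fg y) // subrr.
have [dh dh0] := @near0_diff (f - g) x H0.
have -> : f = (f - g) + g by apply: funext => y /=; rewrite subrK.
split; first exact: differentiableD.
have E : 'd (f - g + g) x = 'd (f - g) x \+ 'd g x :> (V -> W) := diffD dh dg.
rewrite E dh0; apply: funext => z /=; rewrite add0r.
Unshelve. all: by end_near.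
Qed.
End Near.
Arguments near_diff {R V W f g x}.
Arguments d_decomp {R W F q}.
Arguments diff_coord_comp {R W phi q i}.
Section Combinators.
Context {R : realType} {V : normedModType R}.
Implicit Types (f g : V -> R) (x : V).

Lemma dM f g x : differentiable f x -> differentiable g x ->
  differentiable (fun y => f y * g y) x.
Proof. move=> df dg; exact: differentiableM df dg. Qed.

Lemma dD f g x : differentiable f x -> differentiable g x ->
  differentiable (fun y => f y + g y) x.
Proof. move=> df dg; exact: differentiableD df dg. Qed.

Lemma dB f g x : differentiable f x -> differentiable g x ->
  differentiable (fun y => f y - g y) x.
Proof. move=> df dg; exact: differentiableB df dg. Qed.

Lemma dN f x : differentiable f x -> differentiable (fun y => - f y) x.
Proof. move=> df; exact: differentiableN df. Qed.

Lemma dC (c : R) x : differentiable (fun _ : V => c) x.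
Proof. exact: differentiable_cst. Qed.

Lemma dX2 f x : differentiable f x -> differentiable (fun y => f y ^+ 2) x.
Proof. move=> H; have -> : (fun y => f y ^+ 2) = (fun y => f y * f y) by apply: funext => y; rewrite expr2.
exact: dM. Qed.

Lemma dV f x : differentiable f x -> f x != 0 -> differentiable (fun y => (f y)^-1) x.
Proof. move=> df fx; exact: differentiableV df fx. Qed.

Lemma dsqrt f x : differentiable f x -> 0 < f x ->
  differentiable (fun y => Num.sqrt (f y)) x.
Proof.
move=> df fx.
have -> : (fun y => Num.sqrt (f y)) = Num.sqrt \o f by [].
apply: differentiable_comp => //.
apply/derivable1_diffP.
have := is_derive1_sqrt fx; case=> //.
Qed.

Lemma dZl (W : normedModType R) f (w : W) x : differentiable f x ->
  differentiable (fun y => f y *: w) x.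
Proof. move=> df; exact: differentiableZl df. Qed.

Lemma dDv (W : normedModType R) (F G : V -> W) x : differentiable F x -> differentiable G x ->
  differentiable (fun y => F y + G y) x.
Proof. move=> df dg; exact: differentiableD df dg. Qed.

End Combinators.

Section Gen.
Context {R : realType} {V : normedModType R}.

Lemma S_diff_gen (A B : V -> R) x : differentiable A x -> differentiable B x ->
  differentiable (fun y => Sab (A y) (B y)) x.
Proof.
move=> hA hB; rewrite /Sab; apply: dD; apply: dX2 || apply: dM; try apply: dX2.
- apply: dB; [exact: dC | exact: dM].
- exact: dC.
- exact: dD.
Qed.

Lemma k_diff_gen (A B : V -> R) x : differentiable A x -> differentiable B x ->
  differentiable (fun y => (Num.sqrt (Sab (A y) (B y)))^-1) x.
Proof.
move=> hA hB; apply: dV; last exact: sqrtS_neq0.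
by apply: dsqrt; [exact: S_diff_gen | exact: Sab_gt0].
Qed.

Lemma sq_diff_gen (A B : V -> R) x : differentiable A x -> differentiable B x ->
  differentiable (fun y => Num.sqrt (Sab (A y) (B y))) x.
Proof. by move=> hA hB; apply: dsqrt; [exact: S_diff_gen | exact: Sab_gt0]. Qed.

Lemma coord_diff (F : V -> 'rV[R]_3) q k : differentiable F q ->
  differentiable (fun y => F y 0 k) q.
Proof.
move=> dF; have -> : (fun y => F y 0 k) = (fun M : 'rV[R]_3 => M 0 k) \o F by [].
apply: differentiable_comp => //; exact: differentiable_coord.
Qed.

End Gen.


Section OneD.
Context {R : realType}.

Lemma DZl (W : normedModType R) (c : R -> R) (E : W) a : derivable c a 1 ->
  'D_1 (fun t => c t *: E) a = 'D_1 c a *: E.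
Proof.
move=> /derivable1_diffP dc.
rewrite deriveE; last exact: dZl.
by rewrite diffZl // -deriveE.
Qed.

Lemma derZl (W : normedModType R) (c : R -> R) (E : W) a : derivable c a 1 ->
  derivable (fun t => c t *: E) a 1.
Proof. by move=> /derivable1_diffP dc; apply/derivable1_diffP; apply: dZl. Qed.

Lemma derMf (c d : R -> R) a : derivable c a 1 -> derivable d a 1 ->
  derivable (fun t => c t * d t) a 1.
Proof. move=> dc dd; have := derivableM dc dd; exact. Qed.

Lemma DMf (c d : R -> R) a : derivable c a 1 -> derivable d a 1 ->
  'D_1 (fun t => c t * d t) a = c a * 'D_1 d a + d a * 'D_1 c a.
Proof. move=> dc dd; have := deriveM dc dd; exact. Qed.

Lemma D_kvec3 (k P0 P1 P2 : R -> R) a : derivable k a 1 -> derivable P0 a 1 ->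
  derivable P1 a 1 -> derivable P2 a 1 ->
  'D_1 (fun t => k t *: vec3 (P0 t) (P1 t) (P2 t)) a =
  vec3 (k a * 'D_1 P0 a + P0 a * 'D_1 k a) (k a * 'D_1 P1 a + P1 a * 'D_1 k a)
       (k a * 'D_1 P2 a + P2 a * 'D_1 k a).
Proof.
move=> dk d0 d1 d2.
have -> : (fun t => k t *: vec3 (P0 t) (P1 t) (P2 t)) = fun t =>
   ((k t * P0 t) *: vec3 1 0 0 + (k t * P1 t) *: vec3 0 1 0) + (k t * P2 t) *: vec3 0 0 1.
  by apply: funext => t; rewrite scale_vec3 vec3_dec.
rewrite deriveD; first last.
- by apply: derZl; apply: derMf.
- apply: derivableD; by apply: derZl; apply: derMf.
rewrite deriveD; first last.
- by apply: derZl; apply: derMf.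
- by apply: derZl; apply: derMf.
rewrite !DZl; try by apply: derMf.
by rewrite !DMf // [in RHS]vec3_dec.
Qed.

Lemma D_chain (W : normedModType R) (Psi : R -> W) (phi : R -> R) x :
  derivable phi x 1 -> derivable Psi (phi x) 1 ->
  'D_1 (Psi \o phi) x = 'D_1 phi x *: 'D_1 Psi (phi x).
Proof.
move=> /derivable1_diffP dphi /derivable1_diffP dPsi.
rewrite deriveE; last exact: differentiable_comp.
rewrite diff_comp //= !deriveE //.
set r := 'd phi x 1.
by rewrite -[in LHS](mulr1 r) -[r * 1]/(r *: (1:R)) linearZ.
Qed.

Lemma did (a : R) : differentiable (fun t : R => t) a.
Proof. by []. Qed.

Lemma Dlin (m c a : R) : derivable (fun t : R => m * t + c) a 1 /\ 'D_1 (fun t : R => m * t + c) a = m.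
Proof.
have dm : derivable (m \*o id) a 1.
  apply/derivable1_diffP; apply: dM; [exact: dC | exact: did].
split.
  apply/derivable1_diffP; apply: dD; last exact: dC.
  apply: dM; [exact: dC | exact: did].
have -> : (fun t : R => m * t + c) = (m \*o id) + cst c by [].
rewrite deriveD // deriveMl; last exact: derivable_id.
by rewrite derive_id derive_cst mulr1 addr0.
Qed.

Definition Nh1 (b t : R) : 'rV[R]_3 :=
  (Num.sqrt (Sab t b))^-1 *: vec3 (t + b) (- t + b) (1 + t * b).
Definition Nh2 (a t : R) : 'rV[R]_3 :=
  (Num.sqrt (Sab a t))^-1 *: vec3 (a + t) (- a + t) (1 + a * t).

Lemma Nh1_der b a : derivable (Nh1 b) a 1.
Proof.
apply/derivable1_diffP; rewrite /Nh1.
have -> : (fun t => (Num.sqrt (Sab t b))^-1 *: vec3 (t + b) (- t + b) (1 + t * b)) =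
  fun t => ((Num.sqrt (Sab t b))^-1 * (t + b)) *: vec3 1 0 0 +
     ((Num.sqrt (Sab t b))^-1 * (- t + b)) *: vec3 0 1 0 +
     ((Num.sqrt (Sab t b))^-1 * (1 + t * b)) *: vec3 0 0 1.
  by apply: funext => t; rewrite scale_vec3 vec3_dec.
have hk := @k_diff_gen R R (fun t => t) (fun=> b) a (did a) (dC b a).
apply: dDv; first apply: dDv.
all: apply: dZl; apply: dM => //.
Qed.

Lemma Nh2_der a b : derivable (Nh2 a) b 1.
Proof.
apply/derivable1_diffP; rewrite /Nh2.
have -> : (fun t => (Num.sqrt (Sab a t))^-1 *: vec3 (a + t) (- a + t) (1 + a * t)) =
  fun t => ((Num.sqrt (Sab a t))^-1 * (a + t)) *: vec3 1 0 0 +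
     ((Num.sqrt (Sab a t))^-1 * (- a + t)) *: vec3 0 1 0 +
     ((Num.sqrt (Sab a t))^-1 * (1 + a * t)) *: vec3 0 0 1.
  by apply: funext => t; rewrite scale_vec3 vec3_dec.
have hk := @k_diff_gen R R (fun=> a) (fun t => t) b (dC a b) (did b).
apply: dDv; first apply: dDv.
all: apply: dZl; apply: dM => //.
Qed.

Lemma Dlin' (P : R -> R) (m c a : R) : (forall t, P t = m * t + c) ->
  derivable P a 1 /\ 'D_1 P a = m.
Proof. move=> HP; have -> : P = fun t => m * t + c by apply: funext. exact: Dlin. Qed.

Lemma Nh1_D_neq0 b a : 'D_1 (Nh1 b) a != 0.
Proof.
have dk : derivable (fun t => (Num.sqrt (Sab t b))^-1) a 1.
  by apply/derivable1_diffP; apply: k_diff_gen; [exact: did | exact: dC].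
have [d0 e0] : derivable (fun t : R => t + b) a 1 /\ 'D_1 (fun t : R => t + b) a = 1.
  by apply: (@Dlin' _ 1 b) => t; rewrite mul1r.
have [d1 e1] : derivable (fun t : R => - t + b) a 1 /\ 'D_1 (fun t : R => - t + b) a = (-1).
  by apply: (@Dlin' _ (-1) b) => t; rewrite mulN1r.
have [d2 e2] : derivable (fun t : R => 1 + t * b) a 1 /\ 'D_1 (fun t : R => 1 + t * b) a = b.
  by apply: (@Dlin' _ b 1) => t; rewrite addrC mulrC.
rewrite /Nh1 (@D_kvec3 (fun t => (Num.sqrt (Sab t b))^-1) (fun t => t + b) (fun t => - t + b) (fun t => 1 + t * b) a dk d0 d1 d2) e0 e1 e2.
set kk := (Num.sqrt (Sab a b))^-1; set ka := 'D_1 _ a.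
have kk0 : kk != 0 by rewrite invr_neq0 // sqrtS_neq0.
apply/eqP => /vec3_eq0 [X Y Z].
have : kk * 1 + (a + b) * ka + (kk * -1 + (- a + b) * ka) = 2 * (b * ka) by ring.
rewrite X Y addr0 => /esym/eqP.
rewrite mulf_eq0 pnatr_eq0 /= mulf_eq0 => /orP [/eqP b0 | /eqP k0].
- move: Z X; rewrite b0 !mulr0 add0r addr0 mul1r => ->.
  by rewrite mulr0 addr0 mulr1 => /eqP; rewrite (negbTE kk0).
- by move: X; rewrite k0 mulr0 addr0 mulr1 => /eqP; rewrite (negbTE kk0).
Qed.

Lemma Nh2_D_neq0 a b : 'D_1 (Nh2 a) b != 0.
Proof.
have dk : derivable (fun t : R => (Num.sqrt (Sab a t))^-1) b 1.
  by apply/derivable1_diffP; apply: k_diff_gen; [exact: dC | exact: did].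
have [d0 e0] : derivable (fun t : R => a + t) b 1 /\ 'D_1 (fun t : R => a + t) b = 1.
  by apply: (@Dlin' _ 1 a) => t; rewrite mul1r addrC.
have [d1 e1] : derivable (fun t : R => - a + t) b 1 /\ 'D_1 (fun t : R => - a + t) b = 1.
  by apply: (@Dlin' _ 1 (- a)) => t; rewrite mul1r addrC.
have [d2 e2] : derivable (fun t : R => 1 + a * t) b 1 /\ 'D_1 (fun t : R => 1 + a * t) b = a.
  by apply: (@Dlin' _ a 1) => t; rewrite addrC.
rewrite /Nh2 (@D_kvec3 (fun t => (Num.sqrt (Sab a t))^-1) (fun t => a + t) (fun t => - a + t) (fun t => 1 + a * t) b dk d0 d1 d2) e0 e1 e2.
set kk := (Num.sqrt (Sab a b))^-1; set ka := 'D_1 _ b.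
have kk0 : kk != 0 by rewrite invr_neq0 // sqrtS_neq0.
apply/eqP => /vec3_eq0 [X Y Z].
have : kk * 1 + (a + b) * ka - (kk * 1 + (- a + b) * ka) = 2 * (a * ka) by ring.
rewrite X Y subrr => /esym/eqP.
rewrite mulf_eq0 pnatr_eq0 /= mulf_eq0 => /orP [/eqP a0 | /eqP k0].
- move: Z X; rewrite a0 mulr0 mul0r addr0 add0r mul1r => ->.
  by rewrite mulr0 addr0 mulr1 => /eqP; rewrite (negbTE kk0).
- by move: X; rewrite k0 mulr0 addr0 mulr1 => /eqP; rewrite (negbTE kk0).
Qed.

End OneD.

Section Gen2.
Context {R : realType} {V : normedModType R}.
Lemma row_diff (F N : V -> 'rV[R]_3) q : differentiable F q -> differentiable N q ->
  differentiable (fun y => row_mx (F y) (N y)) q.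
Proof.
move=> dF dN.
have -> : (fun y => row_mx (F y) (N y)) =
   \sum_(j < 3 + 3) (fun y => row_mx (F y) (N y) 0 j *: delta_mx 0 j).
  rewrite fct_sumE; apply: funext => y. rewrite -row_sum_delta. done.
apply: differentiable_sum => j; apply: dZl.
case: (splitP j) => k Hk.
- have -> : j = lshift 3 k by apply: val_inj.
  have -> : (fun y => row_mx (F y) (N y) 0 (lshift 3 k)) = (fun y => F y 0 k).
    by apply: funext => y; rewrite row_mxEl.
  exact: coord_diff.
- have -> : j = rshift 3 k by apply: val_inj.
  have -> : (fun y => row_mx (F y) (N y) 0 (rshift 3 k)) = (fun y => N y 0 k).
    by apply: funext => y; rewrite row_mxEr.
  exact: coord_diff.
Qed.

Lemma row_d (F N : V -> 'rV[R]_3) q h :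
  differentiable (fun y => row_mx (F y) (N y)) q ->
  'd (fun y => row_mx (F y) (N y)) q h = row_mx ('d F q h) ('d N q h).
Proof.
move=> dH; set H := (fun y => row_mx (F y) (N y)) in dH *.
have eF : F = lsubmx \o H by apply: funext => y; rewrite /H /= row_mxKl.
have eN : N = rsubmx \o H by apply: funext => y; rewrite /H /= row_mxKr.
have e1 : 'd F q h = lsubmx ('d H q h).
  rewrite {1}eF (diff_comp dH (differentiable_lsubmx _)) /=.
  by rewrite diff_lin //; exact: continuous_lsubmx.
have e2 : 'd N q h = rsubmx ('d H q h).
  rewrite {1}eN (diff_comp dH (differentiable_rsubmx _)) /=.
  by rewrite diff_lin //; exact: continuous_rsubmx.
by rewrite -[LHS]hsubmxK -e1 -e2.
Qed.
End Gen2.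

Section Main.
Context (R : realType) (a1 b1 a2 b2 : R) (g1 w1 g2 w2 : R -> R) (F1 F2 : R -> 'rV[R]_3)
  (f : 'rV[R]_2 -> 'rV[R]_3).
Context (Hg1 : smooth_on `]a1, b1[ g1) (Hw1 : smooth_on `]a1, b1[ w1)
  (Hg2 : smooth_on `]a2, b2[ g2) (Hw2 : smooth_on `]a2, b2[ w2).
Context (HF1 : forall s, s \in `]a1, b1[ -> is_derive s 1 F1 ((2^-1 * w1 s) *: wdir1 (g1 s)))
  (HF2 : forall t, t \in `]a2, b2[ -> is_derive t 1 F2 ((2^-1 * w2 t) *: wdir2 (g2 t)))
  (Hf : forall u v, u \in `]a1, b1[ -> v \in `]a2, b2[ -> f (pt2 u v) = F1 u + F2 v).
Local Notation V2 := ('rV[R]_2).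
Local Notation eu := (e_u R).
Local Notation ev := (e_v R).

Lemma sm_der (a b : R) g x : smooth_on `]a, b[ g -> x \in `]a, b[ -> derivable g x 1.
Proof. move=> H Hx; exact: (H 0%N x Hx). Qed.
Arguments sm_der {a b g x}.

Lemma rect_near u v : u \in `]a1, b1[ -> v \in `]a2, b2[ ->
  \forall q \near pt2 u v, (((q : V2) 0 0 \in `]a1, b1[) /\ (q 0 1 \in `]a2, b2[)).
Proof.
move=> Hu Hv.
have h1 := near_in_itvoo Hu; have h2 := near_in_itvoo Hv.
rewrite -(pt2_00 u v) in h1; rewrite -(pt2_01 u v) in h2.
have c1 := @coord_continuous R 1 2 0 0 (pt2 u v) _ h1.
have c2 := @coord_continuous R 1 2 0 1 (pt2 u v) _ h2.
have c1' : \forall q \near pt2 u v, (q : V2) 0 0 \in `]a1, b1[ := c1.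
have c2' : \forall q \near pt2 u v, (q : V2) 0 1 \in `]a2, b2[ := c2.
near=> q; split.
- exact: (near c1' q).
- exact: (near c2' q).
Unshelve. all: by end_near.
Qed.

Definition G (q : V2) := F1 (q 0 0) + F2 (q 0 1).

Lemma f_near u v : u \in `]a1, b1[ -> v \in `]a2, b2[ ->
  \forall q \near pt2 u v, f q = G q.
Proof.
move=> Hu Hv; have := rect_near _ _ Hu Hv; apply: filterS => q [H1 H2].
by rewrite {1}(pt2E q) Hf.
Qed.

Lemma G_diff {q : V2} : q 0 0 \in `]a1, b1[ -> q 0 1 \in `]a2, b2[ ->
  differentiable G q.
Proof.
move=> H1 H2; apply: dDv; apply: diff_coord_comp.
- by have [] := HF1 _ H1.
- by have [] := HF2 _ H2.
Qed.

Lemma f_diff u v : u \in `]a1, b1[ -> v \in `]a2, b2[ ->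
  differentiable f (pt2 u v).
Proof.
move=> Hu Hv; have [] := near_diff (f_near _ _ Hu Hv) (_ : differentiable G (pt2 u v)) => //.
by apply: G_diff; rewrite ?pt2_00 ?pt2_01.
Qed.

Lemma Df_u u v : u \in `]a1, b1[ -> v \in `]a2, b2[ ->
  'D_eu f (pt2 u v) = (2^-1 * w1 u) *: wdir1 (g1 u).
Proof.
move=> Hu Hv; rewrite D_eu.
have E : \forall s \near u, F1 s + F2 v = f (pt2 s v).
  by have := near_in_itvoo Hu; apply: filterS => s Hs; rewrite Hf.
have [dF1 <-] := HF1 _ Hu.
apply: derive_val; apply: (near_eq_is_derive E).
have -> : (fun s => F1 s + F2 v) = F1 + cst (F2 v) by [].
rewrite -[X in is_derive _ _ _ X]addr0.
apply: is_deriveD; exact: DeriveDef.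
Qed.

Lemma Df_v u v : u \in `]a1, b1[ -> v \in `]a2, b2[ ->
  'D_ev f (pt2 u v) = (2^-1 * w2 v) *: wdir2 (g2 v).
Proof.
move=> Hu Hv; rewrite D_ev.
have E : \forall s \near v, F1 u + F2 s = f (pt2 u s).
  by have := near_in_itvoo Hv; apply: filterS => s Hs; rewrite Hf.
have [dF2 <-] := HF2 _ Hv.
apply: derive_val; apply: (near_eq_is_derive E).
have -> : (fun s => F1 u + F2 s) = cst (F1 u) + F2 by [].
rewrite -[X in is_derive _ _ _ X]add0r.
apply: is_deriveD; exact: DeriveDef.
Qed.


Lemma A_diff {q : V2} : q 0 0 \in `]a1, b1[ -> differentiable (fun q : V2 => g1 (q 0 0)) q.
Proof. by move=> H; apply: diff_coord_comp; apply: (sm_der Hg1). Qed.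

Lemma B_diff {q : V2} : q 0 1 \in `]a2, b2[ -> differentiable (fun q : V2 => g2 (q 0 1)) q.
Proof. by move=> H; apply: diff_coord_comp; apply: (sm_der Hg2). Qed.

Lemma S_diff {q : V2} : q 0 0 \in `]a1, b1[ -> q 0 1 \in `]a2, b2[ ->
  differentiable (fun q : V2 => Sab (g1 (q 0 0)) (g2 (q 0 1))) q.
Proof.
move=> H1 H2; have hA := A_diff H1; have hB := B_diff H2.
rewrite /Sab; apply: dD; apply: dX2 || apply: dM; try apply: dX2.
- apply: dB; [exact: dC | exact: dM].
- exact: dC.
- exact: dD.
Qed.

Lemma sqS_diff {q : V2} : q 0 0 \in `]a1, b1[ -> q 0 1 \in `]a2, b2[ ->
  differentiable (fun q : V2 => Num.sqrt (Sab (g1 (q 0 0)) (g2 (q 0 1)))) q.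
Proof. by move=> H1 H2; apply: dsqrt; [exact: S_diff | exact: Sab_gt0]. Qed.

Lemma k_diff {q : V2} : q 0 0 \in `]a1, b1[ -> q 0 1 \in `]a2, b2[ ->
  differentiable (fun q : V2 => (Num.sqrt (Sab (g1 (q 0 0)) (g2 (q 0 1))))^-1) q.
Proof. by move=> H1 H2; apply: dV; [exact: sqS_diff | exact: sqrtS_neq0]. Qed.

Lemma n_diff {q : V2} : q 0 0 \in `]a1, b1[ -> q 0 1 \in `]a2, b2[ ->
  differentiable (unit_normal g1 g2) q.
Proof.
move=> H1 H2; have hA := A_diff H1; have hB := B_diff H2; have dk := k_diff H1 H2.
have -> : unit_normal g1 g2 = fun q : V2 =>
   let k := (Num.sqrt (Sab (g1 (q 0 0)) (g2 (q 0 1))))^-1 in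
   let a := g1 (q 0 0) in let b := g2 (q 0 1) in
   (k * (a + b)) *: vec3 1 0 0 + (k * (- a + b)) *: vec3 0 1 0 + (k * (1 + a * b)) *: vec3 0 0 1.
  by apply: funext => r; rewrite /unit_normal scale_vec3 vec3_dec.
rewrite /=; apply: dDv; first apply: dDv; apply: dZl; apply: dM => //.
- exact: dD.
- apply: dD => //; exact: dN.
- apply: dD; [exact: dC | exact: dM].
Qed.


Lemma Dn_u u v : u \in `]a1, b1[ -> v \in `]a2, b2[ ->
  'D_eu (unit_normal g1 g2) (pt2 u v) = derive1 g1 u *: 'D_1 (Nh1 (g2 v)) (g1 u).
Proof.
move=> Hu Hv; rewrite D_eu.
have -> : (fun s => unit_normal g1 g2 (pt2 s v)) = Nh1 (g2 v) \o g1.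
  by apply: funext => s; rewrite /unit_normal /= pt2_00 pt2_01.
rewrite D_chain ?derive1E //; first exact: (sm_der Hg1).
exact: Nh1_der.
Qed.

Lemma Dn_v u v : u \in `]a1, b1[ -> v \in `]a2, b2[ ->
  'D_ev (unit_normal g1 g2) (pt2 u v) = derive1 g2 v *: 'D_1 (Nh2 (g1 u)) (g2 v).
Proof.
move=> Hu Hv; rewrite D_ev.
have -> : (fun s => unit_normal g1 g2 (pt2 u s)) = Nh2 (g1 u) \o g2.
  by apply: funext => s; rewrite /unit_normal /= pt2_00 pt2_01.
rewrite D_chain ?derive1E //; first exact: (sm_der Hg2).
exact: Nh2_der.
Qed.


Lemma wdir1_neq0 (g : R) : wdir1 g != 0.
Proof.
apply/eqP => /(congr1 (fun M : 'rV[R]_3 => M 0 0)); rewrite /wdir1 vec3E mxE /=.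
have : 0 <= g ^+ 2 by rewrite sqr_ge0.
move=> H E; have : -1 - g ^+ 2 < 0 by lra.
by rewrite E ltxx.
Qed.

Lemma wdir2_neq0 (g : R) : wdir2 g != 0.
Proof.
apply/eqP => /(congr1 (fun M : 'rV[R]_3 => M 0 0)); rewrite /wdir2 vec3E mxE /=.
have : 0 <= g ^+ 2 by rewrite sqr_ge0.
move=> H E; have : 0 < 1 + g ^+ 2 by lra.
by rewrite E ltxx.
Qed.

Lemma front1 u v : u \in `]a1, b1[ -> v \in `]a2, b2[ -> w1 u = 0 -> w2 v != 0 ->
  (front_at f (unit_normal g1 g2) (pt2 u v) <-> derive1 g1 u != 0).
Proof.
move=> Hu Hv w10 w20.
set n := unit_normal g1 g2; set p := pt2 u v.
have Hu' : p 0 0 \in `]a1, b1[ by rewrite /p pt2_00.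
have Hv' : p 0 1 \in `]a2, b2[ by rewrite /p pt2_01.
have df := f_diff _ _ Hu Hv; have dn : differentiable n p := n_diff Hu' Hv'.
have fu : 'D_eu f p = 0 by rewrite Df_u // w10 mulr0 scale0r.
have fv : 'D_ev f p != 0.
  by rewrite Df_v // scaler_eq0 negb_or mulf_neq0 ?invr_neq0 ?pnatr_eq0 // wdir2_neq0.
have nu : 'D_eu n p = derive1 g1 u *: 'D_1 (Nh1 (g2 v)) (g1 u) by rewrite Dn_u.
have dH : forall h, differentiable (fun y => row_mx (f y) (n y)) p ->
    'd (fun y => row_mx (f y) (n y)) p h =
    row_mx (h 0 1 *: 'D_ev f p) (h 0 0 *: 'D_eu n p + h 0 1 *: 'D_ev n p).
  move=> h dH.
  have E0 := row_d f n p h dH.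
  have E1 := d_decomp h df.
  have E2 := d_decomp h dn.
  rewrite fu scaler0 add0r in E1.
  rewrite E0.
  congr row_mx.
  exact: E1.
  exact: E2.
have eu00 : eu 0 0 = 1 by rewrite /e_u pt2_00.
have eu01 : eu 0 1 = 0 by rewrite /e_u pt2_01.
split.
- case=> dHp inj; apply/negP => /eqP g0.
  have E := dH eu dHp.
  rewrite eu00 eu01 !scale0r scale1r nu g0 scale0r addr0 row_mx0 in E.
  have E0 : 'd (fun y => row_mx (f y) (n y)) p eu = 'd (fun y => row_mx (f y) (n y)) p 0.
    by rewrite linear0.
  have := inj _ _ E0 => /(congr1 (fun M : 'rV[R]_2 => M 0 0)).
  by rewrite eu00 mxE => /eqP; rewrite oner_eq0.
- move=> g10; have dHp := row_diff _ _ _ df dn; split => // h1 h2 E.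
  have E' : 'd (fun y => row_mx (f y) (n y)) p (h1 - h2) = 0 by rewrite linearB E subrr.
  have := dH (h1 - h2) dHp; rewrite E' => Z.
  have [A B] := eq_row_mx (etrans (esym Z) (esym (row_mx0 _ _ _ _))).
  have x01 : (h1 - h2) 0 1 = 0.
    by move: A => /eqP; rewrite scaler_eq0 (negbTE fv) orbF => /eqP.
  rewrite x01 scale0r addr0 nu in B.
  have x00 : (h1 - h2) 0 0 = 0.
    move: B => /eqP; rewrite !scaler_eq0 (negbTE g10) (negbTE (Nh1_D_neq0 _ _)) /=.
    by rewrite orbF => /eqP.
  apply/eqP; rewrite -subr_eq0; apply/eqP.
  by rewrite (decomp (h1 - h2)) x00 x01 !scale0r addr0.
Qed.

Lemma front2 u v : u \in `]a1, b1[ -> v \in `]a2, b2[ -> w2 v = 0 -> w1 u != 0 ->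
  (front_at f (unit_normal g1 g2) (pt2 u v) <-> derive1 g2 v != 0).
Proof.
move=> Hu Hv w20 w10.
set n := unit_normal g1 g2; set p := pt2 u v.
have Hu' : p 0 0 \in `]a1, b1[ by rewrite /p pt2_00.
have Hv' : p 0 1 \in `]a2, b2[ by rewrite /p pt2_01.
have df := f_diff _ _ Hu Hv; have dn : differentiable n p := n_diff Hu' Hv'.
have fv : 'D_ev f p = 0 by rewrite Df_v // w20 mulr0 scale0r.
have fu : 'D_eu f p != 0.
  by rewrite Df_u // scaler_eq0 negb_or mulf_neq0 ?invr_neq0 ?pnatr_eq0 // wdir1_neq0.
have nv : 'D_ev n p = derive1 g2 v *: 'D_1 (Nh2 (g1 u)) (g2 v) by rewrite Dn_v.
have dH : forall h, differentiable (fun y => row_mx (f y) (n y)) p ->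
    'd (fun y => row_mx (f y) (n y)) p h =
    row_mx (h 0 0 *: 'D_eu f p) (h 0 0 *: 'D_eu n p + h 0 1 *: 'D_ev n p).
  move=> h dH.
  have E0 := row_d f n p h dH.
  have E1 := d_decomp h df.
  have E2 := d_decomp h dn.
  rewrite fv scaler0 addr0 in E1.
  rewrite E0.
  congr row_mx.
  exact: E1.
  exact: E2.
have ev00 : ev 0 0 = 0 by rewrite /e_v pt2_00.
have ev01 : ev 0 1 = 1 by rewrite /e_v pt2_01.
split.
- case=> dHp inj; apply/negP => /eqP g0.
  have E := dH ev dHp.
  rewrite ev00 ev01 !scale0r scale1r nv g0 scale0r add0r row_mx0 in E.
  have E0 : 'd (fun y => row_mx (f y) (n y)) p ev = 'd (fun y => row_mx (f y) (n y)) p 0.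
    by rewrite linear0.
  have := inj _ _ E0 => /(congr1 (fun M : 'rV[R]_2 => M 0 1)).
  by rewrite ev01 mxE => /eqP; rewrite oner_eq0.
- move=> g10; have dHp := row_diff _ _ _ df dn; split => // h1 h2 E.
  have E' : 'd (fun y => row_mx (f y) (n y)) p (h1 - h2) = 0 by rewrite linearB E subrr.
  have := dH (h1 - h2) dHp; rewrite E' => Z.
  have [A B] := eq_row_mx (etrans (esym Z) (esym (row_mx0 _ _ _ _))).
  have x00 : (h1 - h2) 0 0 = 0.
    by move: A => /eqP; rewrite scaler_eq0 (negbTE fu) orbF => /eqP.
  rewrite x00 scale0r add0r nv in B.
  have x01 : (h1 - h2) 0 1 = 0.
    move: B => /eqP; rewrite !scaler_eq0 (negbTE g10) (negbTE (Nh2_D_neq0 _ _)) /=.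
    by rewrite orbF => /eqP.
  apply/eqP; rewrite -subr_eq0; apply/eqP.
  by rewrite (decomp (h1 - h2)) x00 x01 !scale0r addr0.
Qed.


Definition Rr (a b : R) := - 2^-1 * ((1 - a * b) * Num.sqrt (Sab a b)).
Definition Lam (q : V2) := w1 (q 0 0) * (w2 (q 0 1) * Rr (g1 (q 0 0)) (g2 (q 0 1))).

Lemma lam_near u v : u \in `]a1, b1[ -> v \in `]a2, b2[ ->
  \forall q \near pt2 u v, area_density f (unit_normal g1 g2) q = Lam q.
Proof.
move=> Hu Hv; have := rect_near _ _ Hu Hv; apply: filterS => q [H1 H2].
rewrite /area_density (pt2E q) (Df_u _ _ H1 H2) (Df_v _ _ H1 H2).
rewrite /unit_normal /= !pt2_00 !pt2_01 det_id /Lam /Rr !pt2_00 !pt2_01.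
by field.
Qed.

Lemma Rr_diff_gen (V : normedModType R) (A B : V -> R) x : differentiable A x ->
  differentiable B x -> differentiable (fun y => Rr (A y) (B y)) x.
Proof.
move=> hA hB; rewrite /Rr; apply: dM; first exact: dC.
apply: dM; last exact: sq_diff_gen.
apply: dB; [exact: dC | exact: dM].
Qed.

Lemma Lam_diff u v : u \in `]a1, b1[ -> v \in `]a2, b2[ -> differentiable Lam (pt2 u v).
Proof.
move=> Hu Hv.
have H1 : (pt2 u v) 0 0 \in `]a1, b1[ by rewrite pt2_00.
have H2 : (pt2 u v) 0 1 \in `]a2, b2[ by rewrite pt2_01.
rewrite /Lam; apply: dM; first by apply: diff_coord_comp; apply: (sm_der Hw1).
apply: dM; first by apply: diff_coord_comp; apply: (sm_der Hw2).
by apply: Rr_diff_gen; [exact: A_diff | exact: B_diff].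
Qed.


Lemma DLam_u u v : u \in `]a1, b1[ -> v \in `]a2, b2[ ->
  'D_eu Lam (pt2 u v) =
  w1 u * (w2 v * 'D_1 (fun s => Rr (g1 s) (g2 v)) u + Rr (g1 u) (g2 v) * 0)
  + (w2 v * Rr (g1 u) (g2 v)) * derive1 w1 u.
Proof.
move=> Hu Hv; rewrite D_eu.
have -> : (fun s => Lam (pt2 s v)) =
   fun s => w1 s * ((fun _ => w2 v) s * (fun s => Rr (g1 s) (g2 v)) s).
  by apply: funext => s; rewrite /Lam pt2_00 pt2_01.
have dR : derivable (fun s => Rr (g1 s) (g2 v)) u 1.
  apply/derivable1_diffP; apply: Rr_diff_gen; last exact: dC.
  by apply/derivable1_diffP; exact: (sm_der Hg1).
have dc : derivable (fun _ : R => w2 v) u 1 by exact: derivable_cst.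
rewrite DMf; first last.
- exact: derMf.
- exact: (sm_der Hw1).
rewrite DMf // derive1E.
have -> : 'D_1 (fun _ : R => w2 v) u = 0 by exact: derive_cst.
by [].
Qed.

Lemma DLam_v u v : u \in `]a1, b1[ -> v \in `]a2, b2[ ->
  'D_ev Lam (pt2 u v) =
  w1 u * (w2 v * 'D_1 (fun t => Rr (g1 u) (g2 t)) v + Rr (g1 u) (g2 v) * derive1 w2 v)
  + (w2 v * Rr (g1 u) (g2 v)) * 0.
Proof.
move=> Hu Hv; rewrite D_ev.
have -> : (fun t => Lam (pt2 u t)) =
   fun t => (fun _ => w1 u) t * (w2 t * (fun t => Rr (g1 u) (g2 t)) t).
  by apply: funext => t; rewrite /Lam pt2_00 pt2_01.
have dR : derivable (fun t => Rr (g1 u) (g2 t)) v 1.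
  apply/derivable1_diffP; apply: Rr_diff_gen; first exact: dC.
  by apply/derivable1_diffP; exact: (sm_der Hg2).
have dc : derivable (fun _ : R => w1 u) v 1 by exact: derivable_cst.
have dw : derivable w2 v 1 by exact: (sm_der Hw2).
rewrite DMf //; last exact: derMf.
rewrite DMf // derive1E.
have -> : 'D_1 (fun _ : R => w1 u) v = 0 by exact: derive_cst.
by [].
Qed.


Lemma neq0_mulP (x y : R) : x * y != 0 -> x != 0 /\ y != 0.
Proof. by rewrite mulf_eq0 negb_or => /andP. Qed.

Lemma Rr_neq0 (a b : R) : (Rr a b != 0) = (a * b != 1).
Proof.
rewrite /Rr !mulf_eq0 oppr_eq0 invr_eq0 pnatr_eq0 /= (negbTE (sqrtS_neq0 a b)) orbF.
by rewrite subr_eq0 eq_sym.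
Qed.

Lemma nondeg1 u v : u \in `]a1, b1[ -> v \in `]a2, b2[ -> w1 u = 0 -> w2 v != 0 ->
  (nondegenerate_at f (unit_normal g1 g2) (pt2 u v) <->
   derive1 w1 u != 0 /\ g1 u * g2 v != 1).
Proof.
move=> Hu Hv w10 w20.
have dL := Lam_diff _ _ Hu Hv.
have [dl El] := near_diff (lam_near _ _ Hu Hv) dL.
have key : forall w, 'd (area_density f (unit_normal g1 g2)) (pt2 u v) w =
    w 0 0 * ((w2 v * Rr (g1 u) (g2 v)) * derive1 w1 u).
  move=> w; have E1 := congr1 (fun F => F w) El.
  apply: (etrans E1).
  have E2 := d_decomp w dL.
  rewrite (DLam_u _ _ Hu Hv) (DLam_v _ _ Hu Hv) w10 !mul0r !add0r mulr0 in E2.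
  by rewrite E2 /= scaler0 addr0.
split.
- case=> _ [w]; rewrite key => /neq0_mulP [_ /neq0_mulP [/neq0_mulP [_ HR] Hd]].
  by split => //; rewrite -Rr_neq0.
- case=> Hd Hab; split => //; exists eu.
  rewrite key /e_u pt2_00 mul1r mulf_neq0 // mulf_neq0 //.
  by rewrite Rr_neq0.
Qed.

Lemma nondeg2 u v : u \in `]a1, b1[ -> v \in `]a2, b2[ -> w2 v = 0 -> w1 u != 0 ->
  (nondegenerate_at f (unit_normal g1 g2) (pt2 u v) <->
   derive1 w2 v != 0 /\ g1 u * g2 v != 1).
Proof.
move=> Hu Hv w20 w10.
have dL := Lam_diff _ _ Hu Hv.
have [dl El] := near_diff (lam_near _ _ Hu Hv) dL.
have key : forall w, 'd (area_density f (unit_normal g1 g2)) (pt2 u v) w =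
    w 0 1 * (w1 u * (Rr (g1 u) (g2 v) * derive1 w2 v)).
  move=> w; have E1 := congr1 (fun F => F w) El.
  apply: (etrans E1).
  have E2 := d_decomp w dL.
  rewrite (DLam_u _ _ Hu Hv) (DLam_v _ _ Hu Hv) w20 !mul0r !add0r !mulr0 !addr0 in E2.
  by rewrite E2 /= scaler0 add0r.
split.
- case=> _ [w]; rewrite key => /neq0_mulP [_ /neq0_mulP [_ /neq0_mulP [HR Hd]]].
  by split => //; rewrite -Rr_neq0.
- case=> Hd Hab; split => //; exists ev.
  rewrite key /e_v pt2_01 mul1r mulf_neq0 // mulf_neq0 //.
  by rewrite Rr_neq0.
Qed.


Lemma not_both u v : u \in `]a1, b1[ -> v \in `]a2, b2[ ->
  \rank (lin1_mx ('d f (pt2 u v))) = 1%N -> w1 u * w2 v = 0 ->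
  (w1 u = 0 /\ w2 v != 0) \/ (w2 v = 0 /\ w1 u != 0).
Proof.
move=> Hu Hv Hr /eqP; rewrite mulf_eq0.
have [w10|w10] := eqVneq (w1 u) 0; have [w20|w20] := eqVneq (w2 v) 0 => //=; try by [left | right].
move=> _; exfalso.
have df := f_diff _ _ Hu Hv.
have E : lin1_mx ('d f (pt2 u v)) = 0.
  apply/matrixP => i j; rewrite !mxE.
  have := d_decomp (delta_mx 0 i) df.
  rewrite (Df_u _ _ Hu Hv) (Df_v _ _ Hu Hv) w10 w20 !mulr0 !scale0r !scaler0 addr0 => ->.
  by rewrite mxE.
by move: Hr; rewrite E mxrank0.
Qed.

Lemma main_sec u v : u \in `]a1, b1[ -> v \in `]a2, b2[ ->
  w1 u * w2 v = 0 ->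
  \rank (lin1_mx ('d f (pt2 u v))) = 1%N ->
  [/\ (w1 u = 0 -> (front_at f (unit_normal g1 g2) (pt2 u v) <-> derive1 g1 u != 0)),
      (w2 v = 0 -> (front_at f (unit_normal g1 g2) (pt2 u v) <-> derive1 g2 v != 0)),
      (w1 u = 0 -> (nondegenerate_at f (unit_normal g1 g2) (pt2 u v) <->
                     derive1 w1 u != 0 /\ g1 u * g2 v != 1)) &
      (w2 v = 0 -> (nondegenerate_at f (unit_normal g1 g2) (pt2 u v) <->
                     derive1 w2 v != 0 /\ g1 u * g2 v != 1))].
Proof.
move=> Hu Hv H0 Hr.
case: (not_both _ _ Hu Hv Hr H0) => [[w10 w20]|[w20 w10]]; split => H.
- exact: front1.
- by move: w20; rewrite H eqxx.
- exact: nondeg1.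
- by move: w20; rewrite H eqxx.
- by move: w10; rewrite H eqxx.
- exact: front2.
- by move: w10; rewrite H eqxx.
- exact: nondeg2.
Qed.

End Main.

Theorem lemma4p1 (R : realType)
  (a1 b1 a2 b2 : R) (g1 w1 g2 w2 : R -> R) (F1 F2 : R -> 'rV[R]_3)
  (f : 'rV[R]_2 -> 'rV[R]_3) (u0 v0 : R) :
  (* real Weierstrass data, smooth on the coordinate intervals *)
  smooth_on `]a1, b1[ g1 -> smooth_on `]a1, b1[ w1 ->
  smooth_on `]a2, b2[ g2 -> smooth_on `]a2, b2[ w2 ->
  (* F1, F2 are the two integrals of the Weierstrass representation *)
  (forall s, s \in `]a1, b1[ -> is_derive s 1 F1 ((2^-1 * w1 s) *: wdir1 (g1 s))) ->
  (forall t, t \in `]a2, b2[ -> is_derive t 1 F2 ((2^-1 * w2 t) *: wdir2 (g2 t))) ->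
  (* f on the coordinate rectangle *)
  (forall u v, u \in `]a1, b1[ -> v \in `]a2, b2[ -> f (pt2 u v) = F1 u + F2 v) ->
  (* f is an immersion on an open dense subset of the coordinate rectangle *)
  (exists O : set 'rV[R]_2, open O /\
     O `<=` rect a1 b1 a2 b2 /\
     rect a1 b1 a2 b2 `<=` closure O /\
     (forall q, O q -> immersion_at f q)) ->
  (* p = (u0, v0) is a singular point with w1 w2 (p) = 0 and rank df_p = 1 *)
  u0 \in `]a1, b1[ -> v0 \in `]a2, b2[ ->
  ~ immersion_at f (pt2 u0 v0) ->
  w1 u0 * w2 v0 = 0 ->
  \rank (lin1_mx ('d f (pt2 u0 v0))) = 1%N ->
  [/\ (w1 u0 = 0 -> (front_at f (unit_normal g1 g2) (pt2 u0 v0) <-> derive1 g1 u0 != 0)),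
      (w2 v0 = 0 -> (front_at f (unit_normal g1 g2) (pt2 u0 v0) <-> derive1 g2 v0 != 0)),
      (w1 u0 = 0 -> (nondegenerate_at f (unit_normal g1 g2) (pt2 u0 v0) <->
                     derive1 w1 u0 != 0 /\ g1 u0 * g2 v0 != 1)) &
      (w2 v0 = 0 -> (nondegenerate_at f (unit_normal g1 g2) (pt2 u0 v0) <->
                     derive1 w2 v0 != 0 /\ g1 u0 * g2 v0 != 1))].
Proof.
move=> Hg1 Hw1 Hg2 Hw2 HF1 HF2 Hf _ Hu Hv _ H0 Hr.
exact: (@main_sec _ _ _ _ _ _ _ _ _ _ _ _ Hg1 Hw1 Hg2 Hw2 HF1 HF2 Hf _ _ Hu Hv H0 Hr).
Qed.
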